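(* Let $N\ge1$, $n=\sum_{\nu=1}^N n_\nu$, $m\ge1$. For $\nu=1,\dots,N$ let $Q_\nu\in\mathbb{R}^{n_\nu\times n_\nu}$ be symmetric positive definite, $c_\nu\in\mathbb{R}^{n_\nu}$, and $X_\nu\subseteq\mathbb{R}^{n_\nu}$ nonempty, convex and closed; let $X=X_1\times\dots\times X_N$. Let $a\in\mathbb{R}^m$, $a\ge0$, $Q_y\in\mathbb{R}^{m\times m}$ positive definite diagonal, and $b(x)=B^\top x$, $l(x)=L^\top x$ with $B,L\in\mathbb{R}^{n\times m}$. Let $\varphi(x)=\sum_{i=1}^m a_i\max\{(Q_y^{-1}b(x))_i,l_i(x)\}$ and assume there exist $\rho\ge0$, $\omega_1,\omega_2\in\mathbb{R}$ with $\min\{0,\varphi(x)\}\ge\omega_1\|x\|+\omega_2$ for all $x\in X$ with $\|x\|>\rho$. Then the multi-leader-follower game described in the context has a Nash equilibrium.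
   Context: Notation: $x=(x_1,\dots,x_N)$, $x_\nu\in\mathbb{R}^{n_\nu}$, $x_{-\nu}$ = all components other than $x_\nu$. Multi-leader-follower game: given $x$, the follower solves $\min_{y\in\mathbb{R}^m}\tfrac12 y^\top Q_y y-b(x)^\top y$ s.t. $y\ge l(x)$, with unique solution $y(x)=\max\{Q_y^{-1}b(x),l(x)\}$ (componentwise); leader $\nu$ solves $\min_{x_\nu\in X_\nu}\theta_\nu(x_\nu,x_{-\nu})=\tfrac12 x_\nu^\top Q_\nu x_\nu+c_\nu^\top x_\nu+a^\top y(x)$. A Nash equilibrium is $x^*\in X$ with $\theta_\nu(x^*_\nu,x^*_{-\nu})\le\theta_\nu(x_\nu,x^*_{-\nu})$ for all $x_\nu\in X_\nu$ and all $\nu$. *)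

(* Defs.v *)
From HB Require Import structures.
From mathcomp Require Import all_boot all_order all_algebra.
From mathcomp Require Import all_classical all_reals all_analysis.
Set Implicit Arguments. Unset Strict Implicit. Unset Printing Implicit Defensive.
Import Order.TTheory GRing.Theory Num.Theory.
Import numFieldTopology.Exports numFieldNormedType.Exports.
Local Open Scope ring_scope.
Local Open Scope classical_set_scope.

Section MLFG.
Variable R : realType.

Definition spd k (Q : 'M[R]_k) : Prop :=
  Q^T = Q /\ forall v : 'cV[R]_k, v != 0 -> 0 < (v^T *m Q *m v) 0 0.

Definition pos_diag k (Q : 'M[R]_k) : Prop :=
  is_diag_mx Q /\ forall i, 0 < Q i i.

Definition convex_set k (S : set 'cV[R]_k) : Prop :=
  forall u v, S u -> S v -> forall t : R, 0 <= t <= 1 ->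
    S (t *: u + (1 - t) *: v).

Variables (N : nat) (nn : 'I_N -> nat) (m : nat).

Definition profile := forall nu : 'I_N, 'cV[R]_(nn nu).

Definition pnorm (x : profile) : R :=
  Num.sqrt (\sum_(nu < N) \sum_(i < nn nu) (x nu i 0) ^+ 2).

(* B^T x for B in R^{n x m} given by its row blocks B_nu in R^{n_nu x m} *)
Definition blockT (B : forall nu : 'I_N, 'M[R]_(nn nu, m)) (x : profile)
  : 'cV[R]_m := \sum_(nu < N) (B nu)^T *m x nu.

Definition follower (Qy : 'M[R]_m) (B L : forall nu : 'I_N, 'M[R]_(nn nu, m))
  (x : profile) : 'cV[R]_m :=
  \col_i Num.max ((invmx Qy *m blockT B x) i 0) (blockT L x i 0).

Definition theta (Q : forall nu : 'I_N, 'M[R]_(nn nu))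
  (c : forall nu : 'I_N, 'cV[R]_(nn nu)) (a : 'cV[R]_m) (Qy : 'M[R]_m)
  (B L : forall nu : 'I_N, 'M[R]_(nn nu, m)) (nu : 'I_N) (x : profile) : R :=
  (2^-1 * ((x nu)^T *m Q nu *m x nu) 0 0 + ((c nu)^T *m x nu) 0 0
   + (a^T *m follower Qy B L x) 0 0).

Definition phi (a : 'cV[R]_m) (Qy : 'M[R]_m)
  (B L : forall nu : 'I_N, 'M[R]_(nn nu, m)) (x : profile) : R :=
  \sum_(i < m) a i 0 * Num.max ((invmx Qy *m blockT B x) i 0) (blockT L x i 0).

Definition inX (X : forall nu : 'I_N, set 'cV[R]_(nn nu)) (x : profile) : Prop :=
  forall nu, X nu (x nu).

Definition nash_equilibrium (X : forall nu : 'I_N, set 'cV[R]_(nn nu))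
  (Q : forall nu : 'I_N, 'M[R]_(nn nu)) (c : forall nu : 'I_N, 'cV[R]_(nn nu))
  (a : 'cV[R]_m) (Qy : 'M[R]_m) (B L : forall nu : 'I_N, 'M[R]_(nn nu, m))
  (xs : profile) : Prop :=
  inX X xs /\
  forall nu (xnu : 'cV[R]_(nn nu)), X nu xnu ->
    theta Q c a Qy B L nu xs <= theta Q c a Qy B L nu (@dfwith _ (fun j => 'cV[R]_(nn j)) xs nu xnu).

End MLFG.

(* Main.v *)
Require Import Defs.
From HB Require Import structures.
From mathcomp Require Import all_boot all_order all_algebra.
From mathcomp Require Import all_classical all_reals all_analysis.
From mathcomp Require Import ring lra.
Import Order.TTheory GRing.Theory Num.Theory.
Import numFieldTopology.Exports numFieldNormedType.Exports.
Set Implicit Arguments. Unset Strict Implicit.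
Local Open Scope ring_scope.
Local Open Scope classical_set_scope.

Section Cont.
Variables (R : realType) (T : topologicalType).

Definition ecf p q (F : T -> 'M[R]_(p, q)) :=
  forall i j, continuous (fun x => F x i j).

Lemma cont_cst (r : R) : continuous (fun _ : T => r).
Proof. by move=> x; apply: cvg_cst. Qed.

Lemma cont_add (f g : T -> R) : continuous f -> continuous g ->
  continuous (fun x => f x + g x).
Proof. by move=> cf cg x; exact: (continuousD (cf x) (cg x)). Qed.

Lemma cont_mul (f g : T -> R) : continuous f -> continuous g ->
  continuous (fun x => f x * g x).
Proof. by move=> cf cg x; exact: (continuousM (cf x) (cg x)). Qed.

Lemma cont_max (f g : T -> R) : continuous f -> continuous g ->
  continuous (fun x => Num.max (f x) (g x)).
Proof. by move=> cf cg x; exact: (continuous_max (cf x) (cg x)). Qed.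

Lemma cont_sum n (F : 'I_n -> T -> R) : (forall i, continuous (F i)) ->
  continuous (fun x => \sum_(i < n) F i x).
Proof.
elim: n F => [|n IH] F cF.
  by under eq_fun do rewrite big_ord0; apply: cont_cst.
under eq_fun do rewrite big_ord_recr /=.
apply: cont_add; last exact: cF.
by apply: (IH (fun i => F (widen_ord (leqnSn n) i))).
Qed.

Lemma ecf_cst p q (A : 'M[R]_(p, q)) : ecf (fun _ => A).
Proof. by move=> i j; apply: cont_cst. Qed.

Lemma ecf_mul p q r (F : T -> 'M[R]_(p, q)) (G : T -> 'M[R]_(q, r)) :
  ecf F -> ecf G -> ecf (fun x => F x *m G x).
Proof.
move=> cF cG i j; under eq_fun do rewrite mxE.
by apply: cont_sum => k; apply: cont_mul.
Qed.

Lemma ecf_tr p q (F : T -> 'M[R]_(p, q)) : ecf F -> ecf (fun x => (F x)^T).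
Proof. by move=> cF i j; under eq_fun do rewrite mxE; apply: cF. Qed.

Lemma ecf_sum p q n (F : 'I_n -> T -> 'M[R]_(p, q)) : (forall k, ecf (F k)) ->
  ecf (fun x => \sum_(k < n) F k x).
Proof.
move=> cF i j; under eq_fun do rewrite summxE.
by apply: cont_sum => k; apply: cF.
Qed.

End Cont.

Lemma ecf_id (R : realType) p q : ecf (fun x : 'M[R]_(p, q) => x).
Proof. by move=> i j; apply: coord_continuous. Qed.

Lemma trmx_cont (R : realType) p q : continuous (fun x : 'M[R]_(p, q) => x^T).
Proof.
move=> M s /= /nbhs_ballP [e e0 es].
apply/nbhs_ballP; exists e => //= N [_ MN]; apply: es; split => // i j.
by rewrite !mxE; apply: MN.
Qed.

Section Comp.
Variable R : realType.

Definition box_c k (M : R) := [set v : 'cV[R]_k | forall i, `[- M, M] (v i 0)].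

Lemma box_compact k M : compact (@box_c k M).
Proof.
have : compact ((fun r : 'rV[R]_k => r^T) @`
    [set r : 'rV[R]_k | forall i, `[- M, M] (r ord0 i)]).
  have := (continuous_compact (continuous_subspaceT (@trmx_cont R 1 k))).
  apply.
  by apply: (@rV_compact R k (fun _ => `[- M, M]%classic)) => i; exact: segment_compact.
congr compact; apply/seteqP; split => v.
  by move=> [r Hr <-] i; rewrite mxE; exact: Hr.
by move=> Hv; exists v^T; [move=> i; rewrite mxE; exact: Hv| exact: trmxK].
Qed.

Definition sq k (v : 'cV[R]_k) := \sum_(i < k) (v i 0) ^+ 2.
Definition quad k (Q : 'M[R]_k) (v : 'cV[R]_k) := (v^T *m Q *m v) 0 0.

Lemma cont_sq (T : topologicalType) (f : T -> R) : continuous f ->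
  continuous (fun x => f x ^+ 2).
Proof. by move=> cf; under eq_fun do rewrite expr2; exact: cont_mul. Qed.

Lemma le_sum1 n (F : 'I_n -> R) j : (forall i, 0 <= F i) ->
  F j <= \sum_(i < n) F i.
Proof.
move=> F0; rewrite (bigD1 j) //= lerDl; exact: sumr_ge0.
Qed.

Lemma sq_ge0 k (v : 'cV[R]_k) : 0 <= sq v.
Proof. by apply: sumr_ge0 => i _; exact: sqr_ge0. Qed.

Lemma sq0 k : sq (0 : 'cV[R]_k) = 0.
Proof. by rewrite /sq big1 // => i _; rewrite mxE expr0n. Qed.

Lemma sq_gt0 k (v : 'cV[R]_k) : v != 0 -> 0 < sq v.
Proof.
move=> nz; rewrite lt_def sq_ge0 andbT; apply/negP => /eqP h.
move/negP: nz; apply; apply/eqP/matrixP => i j; rewrite ord1 mxE.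
have := psumr_eq0P (fun i _ => sqr_ge0 (v i 0)) h (i := i) isT.
by move/eqP; rewrite sqrf_eq0 => /eqP.
Qed.

Lemma sqZ k t (v : 'cV[R]_k) : sq (t *: v) = t ^+ 2 * sq v.
Proof. by rewrite /sq mulr_sumr; apply: eq_bigr => i _; rewrite mxE exprMn. Qed.

Lemma quadZ k (Q : 'M[R]_k) t v : quad Q (t *: v) = t ^+ 2 * quad Q v.
Proof.
rewrite /quad linearZ /= [(t *: v)^T]linearZ /=.
by rewrite -!scalemxAl scalerA mxE expr2.
Qed.

Lemma quad0 k (Q : 'M[R]_k) : quad Q 0 = 0.
Proof. by rewrite /quad mulmx0 mxE. Qed.

Lemma quad_cont k (Q : 'M[R]_k) : continuous (quad Q).
Proof.
have h := ecf_mul (ecf_mul (ecf_tr (@ecf_id R k 1)) (ecf_cst (A:=Q))) (@ecf_id R k 1).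
exact: h 0 0.
Qed.

Lemma sq_cont k : continuous (@sq k).
Proof.
by apply: cont_sum => i; apply: cont_sq; exact: coord_continuous.
Qed.

Lemma quad_lb k (Q : 'M[R]_k) : spd Q ->
  exists2 lam, 0 < lam & forall v, lam * sq v <= quad Q v.
Proof.
move=> [_ Qpd].
set A := @box_c k 1 `&` [set v | 1 <= sq v].
have cA : compact A.
  apply: compact_closedI; first exact: box_compact.
  rewrite (_ : [set v | 1 <= sq v] = @sq k @^-1` [set x | 1 <= x]) //.
  apply: preimage_closed; last exact: closed_ge.
  by move=> v _; exact: sq_cont.
have norm v : v != 0 -> let u := (Num.sqrt (sq v))^-1 *: v in
    A u /\ quad Q u * sq v = quad Q v.
  move=> nz u; have s0 := sq_gt0 nz.
  have sqrt0 : 0 < Num.sqrt (sq v) by rewrite sqrtr_gt0.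
  have su : sq u = 1.
    by rewrite /u sqZ exprVn sqr_sqrtr ?ltW // mulVf // gt_eqF.
  split; last first.
    rewrite /u quadZ exprVn sqr_sqrtr ?ltW // mulrAC mulVf ?mul1r //.
    by rewrite gt_eqF.
  split; last by rewrite /= su.
  move=> i; have := @le_sum1 k (fun i => (u i 0) ^+ 2) i (fun i => sqr_ge0 _).
  rewrite -/(sq u) su => h.
  by rewrite /= in_itv /=; apply/andP; split; nra.
have [[c Ac]|A0] := pselect (A !=set0).
  have [c' c'A minc] := compact_EVT_min (ex_intro _ c Ac) cA
     (continuous_subspaceT (@quad_cont k Q)).
  move/set_mem: c'A => [_ c'1].
  have c'nz : c' != 0.
    apply/eqP => c0; have : sq c' = 0 by rewrite c0; exact: sq0.
    by move: c'1 => /= c'1 h; rewrite h ler10 in c'1.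
  exists (quad Q c'); first exact: Qpd.
  move=> v; have [->|nz] := eqVneq v 0; first by rewrite sq0 quad0 mulr0.
  have [Au <-] := norm v nz; apply: ler_wpM2r; first exact: sq_ge0.
  by apply: minc; apply: mem_set.
exists 1 => // v; have [->|nz] := eqVneq v 0; first by rewrite sq0 quad0 mulr0.
by exfalso; apply: A0; have [Au _] := norm v nz; eexists; exact: Au.
Qed.

End Comp.

Import ArrowAsProduct.

Section Main.
Variables (R : realType) (N : nat) (nn : 'I_N -> nat) (m : nat)
  (Q : forall nu : 'I_N, 'M[R]_(nn nu)) (c : forall nu : 'I_N, 'cV[R]_(nn nu))
  (a : 'cV[R]_m) (Qy : 'M[R]_m) (B L : forall nu : 'I_N, 'M[R]_(nn nu, m)).

Definition PT := forall nu : 'I_N, 'cV[R]_(nn nu).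

Definition fq nu (v : 'cV[R]_(nn nu)) := 2^-1 * quad (Q nu) v + ((c nu)^T *m v) 0 0.

Definition Pot (x : PT) := \sum_(nu < N) fq (x nu) + phi a Qy B L x.

Lemma theta_eq nu (x : PT) : theta Q c a Qy B L nu x = fq (x nu) + phi a Qy B L x.
Proof.
rewrite /theta /fq /phi /quad mxE; congr (_ + _).
by rewrite mxE; apply: eq_bigr => i _; rewrite /follower !mxE.
Qed.

Lemma ecf_proj nu : ecf (fun x : PT => x nu).
Proof.
move=> i j x; apply: (@continuous_comp _ _ _ (fun x : PT => x nu) (fun v => v i j)).
  exact: (@proj_continuous _ (fun nu => 'cV[R]_(nn nu)) nu).
exact: coord_continuous.
Qed.

Lemma Pot_cont : continuous Pot.
Proof.
apply: cont_add.
  apply: cont_sum => nu; apply: cont_add.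
    apply: cont_mul; first exact: cont_cst.
    have h := (ecf_mul (ecf_mul (ecf_tr (ecf_proj (nu:=nu))) (ecf_cst (A:=Q nu))) (ecf_proj (nu:=nu))).
    exact: h 0 0.
  have h := (ecf_mul (ecf_cst (A:=(c nu)^T)) (ecf_proj (nu:=nu))).
  exact: h 0 0.
have eB : forall (BB : forall nu : 'I_N, 'M[R]_(nn nu, m)),
    ecf (fun x : PT => blockT BB x).
  move=> BB; apply: ecf_sum => nu.
  exact: (ecf_mul (ecf_cst (A:=(BB nu)^T)) (ecf_proj (nu:=nu))).
apply: cont_sum => i; apply: cont_mul; first exact: cont_cst.
have h1 := eB L; have h2 := (ecf_mul (ecf_cst (A:=invmx Qy)) (eB B)).
by apply: cont_max; [exact: h2 i 0 | exact: h1 i 0].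
Qed.

Lemma Pot_dfwith (xs : PT) nu (v : 'cV[R]_(nn nu)) :
  Pot (@dfwith _ (fun j => 'cV[R]_(nn j)) xs nu v) - Pot xs =
  theta Q c a Qy B L nu (@dfwith _ (fun j => 'cV[R]_(nn j)) xs nu v) - theta Q c a Qy B L nu xs.
Proof.
rewrite /Pot !theta_eq.
rewrite (bigD1 nu) //= [in X in _ - X](bigD1 nu) //=.
rewrite dfwithin.
rewrite (eq_bigr (fun mu => fq (xs mu))).
  by ring.
by move=> mu ne; rewrite dfwithout // eq_sym.
Qed.

End Main.

Lemma lin_lb (R : realType) k (c : 'cV[R]_k) (lam : R) (v : 'cV[R]_k) : 0 < lam ->
  - (\sum_(i < k) (c i 0) ^+ 2 / lam) - lam / 4 * sq v <= (c^T *m v) 0 0.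
Proof.
move=> l0.
have h : 0 <= \sum_(i < k) (c i 0 * v i 0 + ((c i 0) ^+ 2 / lam + lam / 4 * (v i 0) ^+ 2)).
  apply: sumr_ge0 => i _.
  have -> : c i 0 * v i 0 + ((c i 0) ^+ 2 / lam + lam / 4 * (v i 0) ^+ 2)
     = lam * (c i 0 / lam + v i 0 / 2) ^+ 2.
    by field; rewrite gt_eqF.
  by apply: mulr_ge0; [exact: ltW | exact: sqr_ge0].
rewrite big_split big_split /= -mulr_sumr -/(sq v) in h.
have -> : (c^T *m v) 0 0 = \sum_(i < k) c i 0 * v i 0.
  by rewrite mxE; apply: eq_bigr => i _; rewrite mxE.
lra.
Qed.

Unset Implicit Arguments.
Theorem mainTheorem5 (R : realType) (N : nat) (nn : 'I_N -> nat) (m : nat)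
  (Q : forall nu : 'I_N, 'M[R]_(nn nu)) (c : forall nu : 'I_N, 'cV[R]_(nn nu))
  (X : forall nu : 'I_N, set 'cV[R]_(nn nu))
  (a : 'cV[R]_m) (Qy : 'M[R]_m) (B L : forall nu : 'I_N, 'M[R]_(nn nu, m)) :
  (0 < N)%N -> (0 < m)%N ->
  (forall nu, spd (Q nu)) ->
  (forall nu, X nu !=set0) ->
  (forall nu, convex_set (X nu)) ->
  (forall nu, closed (X nu)) ->
  (forall i, 0 <= a i 0) ->
  pos_diag Qy ->
  (exists (rho w1 w2 : R), 0 <= rho /\
     forall x : profile R nn, inX X x -> rho < pnorm x ->
       Num.min 0 (phi a Qy B L x) >= w1 * pnorm x + w2) ->
  exists xs : profile R nn, nash_equilibrium X Q c a Qy B L xs.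
Proof.
move=> _ _ Qspd Xne _ Xcl _ _ [rho [w1 [w2 [rho0 Hphi]]]].
pose P := Pot Q c a Qy B L.
pose S (x : PT R nn) := \sum_(nu < N) sq (x nu).
have S0 x : 0 <= S x by apply: sumr_ge0 => nu _; exact: sq_ge0.
have pnS x : pnorm x = Num.sqrt (S x) by [].
have Hl : forall nu, exists lam : R, 0 < lam /\ forall v, lam * sq v <= quad (Q nu) v.
  by move=> nu; have [lam l0 hl] := quad_lb (Qspd nu); exists lam.
pose lamf nu := projT1 (cid (Hl nu)).
have lamfP nu : 0 < lamf nu /\ forall v, lamf nu * sq v <= quad (Q nu) v.
  exact: (projT2 (cid (Hl nu))).
pose lam := (1 + \sum_(nu < N) (lamf nu)^-1)^-1.
have sinv0 : 0 <= \sum_(nu < N) (lamf nu)^-1.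
  by apply: sumr_ge0 => nu _; rewrite invr_ge0 ltW //; case: (lamfP nu).
have l0 : 0 < lam by rewrite invr_gt0; lra.
have lle nu : lam <= lamf nu.
  have [lf0 _] := lamfP nu.
  rewrite -[lamf nu]invrK lef_pV2 ?posrE ?invr_gt0 //; last lra.
  have := @le_sum1 R N (fun nu => (lamf nu)^-1) nu.
  have : forall i, 0 <= (lamf i)^-1 by move=> i; rewrite invr_ge0 ltW //; case: (lamfP i).
  move=> h1 /(_ h1) /= h2; lra.
pose Cf nu := \sum_(i < nn nu) (c nu i 0) ^+ 2 / lam.
pose C := \sum_(nu < N) Cf nu.
have fq_lb nu (v : 'cV[R]_(nn nu)) : lam / 4 * sq v - Cf nu <= fq Q c v.
  have [_ hq] := lamfP nu.
  have h1 : lam * sq v <= quad (Q nu) v.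
    apply: le_trans (hq v); apply: ler_wpM2r; [exact: sq_ge0 | exact: lle].
  have h2 := lin_lb (c nu) v l0.
  rewrite /fq -/(Cf nu) in h2 *; lra.
have sum_lb x : lam / 4 * S x - C <= \sum_(nu < N) fq Q c (x nu).
  rewrite /S /C mulr_sumr -sumrB; apply: ler_sum => nu _; exact: fq_lb.
pose D := C - w2 + 2 * w1 ^+ 2 / lam.
have P_lb x : inX X x -> rho < pnorm x -> lam / 8 * S x - D <= P x.
  move=> xX xr; have := Hphi x xX xr; rewrite pnS => h.
  have hm : Num.min 0 (phi a Qy B L x) <= phi a Qy B L x by rewrite ge_min lexx orbT.
  have hs := sum_lb x.
  have sq2 : Num.sqrt (S x) ^+ 2 = S x by rewrite sqr_sqrtr.
  have h3 : 0 <= w1 * Num.sqrt (S x) + 2 * w1 ^+ 2 / lam + lam / 8 * Num.sqrt (S x) ^+ 2.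
    have -> : w1 * Num.sqrt (S x) + 2 * w1 ^+ 2 / lam + lam / 8 * Num.sqrt (S x) ^+ 2
       = lam / 8 * (Num.sqrt (S x) + 4 * w1 / lam) ^+ 2.
      by field; rewrite gt_eqF.
    by apply: mulr_ge0; [lra | exact: sqr_ge0].
  rewrite sq2 in h3.
  rewrite /P /Pot /D; lra.
pose x0 : PT R nn := fun nu => projT1 (cid (Xne nu)).
have x0X : inX X x0 by move=> nu; exact: (projT2 (cid (Xne nu))).
pose T := Num.max (rho ^+ 2) (Num.max (S x0) (8 * (P x0 + D) / lam)).
have T0 : 0 <= T by rewrite le_max sqr_ge0.
have TS : S x0 <= T by rewrite /T le_max le_max lexx orbT.
have Trho : rho ^+ 2 <= T by rewrite /T le_max lexx.
have TP : 8 * (P x0 + D) / lam <= T by rewrite /T le_max le_max lexx !orbT.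
pose M := T + 1.
pose K := [set x : PT R nn | forall nu, (@box_c R (nn nu) M `&` X nu) (x nu)].
have cK : compact K.
  apply: (@tychonoff _ (fun nu => 'cV[R]_(nn nu)) (fun nu => @box_c R (nn nu) M `&` X nu)) => nu; apply: compact_closedI; [exact: box_compact | exact: Xcl].
have entry_le (x : PT R nn) nu (i : 'I_(nn nu)) : (x nu i 0) ^+ 2 <= S x.
  apply: le_trans (@le_sum1 R N (fun nu => sq (x nu)) nu (fun _ => sq_ge0 _)).
  exact: (@le_sum1 R (nn nu) (fun i => (x nu i 0) ^+ 2) i (fun _ => sqr_ge0 _)).
have x0K : K x0.
  move=> nu; split; last exact: x0X.
  move=> i; rewrite /= in_itv /=.
  have := entry_le x0 nu i => h; rewrite /M; apply/andP; split; nra.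
have [xs xsK minP] := compact_EVT_min (ex_intro _ x0 x0K) cK
   (continuous_subspaceT (@Pot_cont R N nn m Q c a Qy B L)).
move/set_mem: xsK => xsK.
have xsX : inX X xs by move=> nu; case: (xsK nu).
have Pmin x : inX X x -> P xs <= P x.
  move=> xX; have [xK|xK] := pselect (K x).
    by apply: minP; apply: mem_set.
  have [nu Hnu] : exists nu, ~ (@box_c R (nn nu) M `&` X nu) (x nu).
    by apply/existsNP.
  have [i Hi] : exists i, ~ `[- M, M]%classic (x nu i 0).
    apply/existsNP => hb; apply: Hnu; split; [exact: hb | exact: xX].
  have hT : T < S x.
    have := entry_le x nu i; move: Hi; rewrite /= in_itv /= /M => Hi h.
    have : ~~ ((- (T + 1) <= x nu i 0) && (x nu i 0 <= T + 1)) by apply/negP.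
    rewrite negb_and -!ltNge => /orP [h'|h']; nra.
  have xr : rho < pnorm x.
    rewrite pnS; rewrite ltNge; apply/negP => h.
    have h2 : Num.sqrt (S x) ^+ 2 = S x by rewrite sqr_sqrtr.
    have : 0 <= Num.sqrt (S x) by exact: sqrtr_ge0.
    nra.
  have := P_lb x xX xr.
  have : P xs <= P x0 by apply: minP; apply: mem_set.
  move=> h1 h2.
  have : P x0 + D <= lam / 8 * S x.
    have : 8 * (P x0 + D) / lam < S x by lra.
    rewrite ltr_pdivrMr // => h3; nra.
  lra.
exists xs; split; first exact: xsX.
move=> nu v vX.
set x' := @dfwith _ (fun j => 'cV[R]_(nn j)) xs nu v.
have x'X : inX X x'.
  by move=> mu; rewrite /x'; case: dfwithP => [|j _]; [exact: vX | exact: xsX].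
have := Pmin x' x'X.
have := Pot_dfwith Q c a Qy B L xs v.
rewrite -/x' -/P; lra.
Qed.
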